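(* Let $\mathcal{X}$ be an input space, let the label space be binary, $\mathcal{Y}=\{0,1\}$, and let $(x,y)$ be distributed according to a fixed joint distribution on $\mathcal{X}\times\mathcal{Y}$. Let $n_e\ge 1$ and let $h_1,\dots,h_{n_e}:\mathcal{X}\to\mathcal{Y}$ be fixed expert predictors, with costs $c_j(x,y)=\mathbb{I}_{h_j(x)\neq y}$ and $\bar c_j(x,y)=1-c_j(x,y)$ for $j=1,\dots,n_e$. Let $\mathcal{H}$ be a hypothesis class of base predictors $h:\mathcal{X}\to\mathcal{Y}$ and $\mathcal{R}$ a hypothesis class of deferral functions $r=(r_0,\dots,r_{n_e}):\mathcal{X}\to\mathbb{R}^{n_e+1}$, with induced decision $r(x)=\arg\max_{j\in\{0,\dots,n_e\}} r_j(x)$. Define the deferral loss $$L_{\mathrm{def}}(h,r,x,y)=\mathbb{I}_{h(x)\neq y}\,\mathbb{I}_{r(x)=0}+\sum_{j=1}^{n_e} c_j(x,y)\,\mathbb{I}_{r(x)=j},$$ and, for a multiclass surrogate loss $l_2(r,x,k)$ ($k\in\{0,\dots,n_e\}$), the surrogate loss (for a given $h$) $$L^h_{\mathrm{surr}}(r,x,y)=\mathbb{I}_{h(x)=y}\,l_2(r,x,0)+\sum_{j=1}^{n_e}\bar c_j(x,y)\,l_2(r,x,j).$$ Let $l_1$ be a surrogate loss for the base predictor. Assume that $l_1$ admits an $\mathcal{H}$-consistency bound with respect to the binary 0-1 loss $\mathbb{I}_{h(x)\neq y}$ with a non-decreasing concave function $\Gamma_1$ satisfying $\Gamma_1(0)=0$,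 and that $l_2$ admits an $\mathcal{R}$-consistency bound with respect to the multiclass (with $n_e+1$ classes) 0-1 loss $\mathbb{I}_{r(x)\neq k}$ with a non-decreasing concave function $\Gamma_2$ satisfying $\Gamma_2(0)=0$. Then for all $h\in\mathcal{H}$ and $r\in\mathcal{R}$, $$\mathcal{E}_{L_{\mathrm{def}}}(h,r)-\mathcal{E}^*_{L_{\mathrm{def}}}(\mathcal{H},\mathcal{R})+\mathcal{M}_{L_{\mathrm{def}}}(\mathcal{H},\mathcal{R})\le \Gamma_1\big(\mathcal{E}_{l_1}(h)-\mathcal{E}^*_{l_1}(\mathcal{H})+\mathcal{M}_{l_1}(\mathcal{H})\big)+n_e\,\Gamma_2\big(\mathcal{E}_{L^h_{\mathrm{surr}}}(r)-\mathcal{E}^*_{L^h_{\mathrm{surr}}}(\mathcal{R})+\mathcal{M}_{L^h_{\mathrm{surr}}}(\mathcal{R})\big),$$ and the factor $n_e$ can be removed when $\Gamma_2$ is linear. In particular, if $\mathcal{H}=\{h_0\}$ is a singleton, this yields an $\mathcal{R}$-consistency bound of $L^{h_0}_{\mathrm{surr}}$ with respect to $L^{h_0}_{\mathrm{def}}(r,x,y):=L_{\mathrm{def}}(h_0,r,x,y)$, namely for all $r\in\mathcal{R}$: $\mathcal{E}_{L^{h_0}_{\mathrm{def}}}(r)-\mathcal{E}^*_{L^{h_0}_{\mathrm{def}}}(\mathcal{R})+\mathcal{M}_{L^{h_0}_{\mathrm{def}}}(\mathcal{R})\le n_e\,\Gamma_2\big(\mathcal{E}_{L^{h_0}_{\mathrm{surr}}}(r)-\mathcal{E}^*_{L^{h_0}_{\mathrm{surr}}}(\mathcal{R})+\mathcal{M}_{L^{h_0}_{\mathrm{surr}}}(\mathcal{R})\big)$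 (without the factor $n_e$ if $\Gamma_2$ is linear).
   Context: For a hypothesis class $\mathcal{G}$ and a non-negative loss $\ell(g,x,y)$, define $\mathcal{E}_\ell(g)=\mathbb{E}_{x,y}[\ell(g,x,y)]$, $\mathcal{E}^*_\ell(\mathcal{G})=\inf_{g\in\mathcal{G}}\mathcal{E}_\ell(g)$, and the minimizability gap $\mathcal{M}_\ell(\mathcal{G})=\mathcal{E}^*_\ell(\mathcal{G})-\mathbb{E}_x\big[\inf_{g\in\mathcal{G}}\mathbb{E}_{y\mid x}[\ell(g,x,y)]\big]$. For the deferral loss, $\mathcal{G}=\mathcal{H}\times\mathcal{R}$ with $g=(h,r)$. A $\mathcal{G}$-consistency bound of a surrogate loss $\ell_s$ with respect to a target loss $\ell_o$ with function $\Gamma$ (non-decreasing, concave, $\Gamma(0)=0$) means: for all $g\in\mathcal{G}$, $\mathcal{E}_{\ell_o}(g)-\mathcal{E}^*_{\ell_o}(\mathcal{G})+\mathcal{M}_{\ell_o}(\mathcal{G})\le\Gamma\big(\mathcal{E}_{\ell_s}(g)-\mathcal{E}^*_{\ell_s}(\mathcal{G})+\mathcal{M}_{\ell_s}(\mathcal{G})\big)$. In the multiclass 0-1 loss for $r$, the classes are $\{0,1,\dots,n_e\}$ and the prediction is $r(x)=\arg\max_j r_j(x)$. *)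

(* Defs.v *)
From HB Require Import structures.
From mathcomp Require Import all_boot all_order all_algebra.
From mathcomp Require Import all_classical all_reals all_analysis.
From mathcomp Require Import measurable_realfun lebesgue_measure lebesgue_integral probability.

Set Implicit Arguments.
Unset Strict Implicit.
Unset Printing Implicit Defensive.

Import Order.TTheory GRing.Theory Num.Theory.
Local Open Scope classical_set_scope.
Local Open Scope ring_scope.
Local Open Scope ereal_scope.

Section Defs.
Context {R : realType} {d : measure_display} {X : measurableType d}.

(* A conditional label distribution: p x is a probability vector on the finite label set Y.
   A joint distribution on X * Y is represented by its marginal P on X together with p. *)
Definition label_dist {Y : finType} (p : X -> Y -> R) : Prop :=
  (forall x y, (0 <= p x y)%R) /\ (forall x, (\sum_(y : Y) p x y)%R = 1%R).

Definition measurable_label_dist {Y : finType} (p : X -> Y -> R) : Prop :=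
  label_dist p /\ forall y : Y, measurable_fun setT (fun x => p x y).

Definition cond_risk {Y : finType} {G : Type} (p : X -> Y -> R)
  (l : G -> X -> Y -> R) (g : G) (x : X) : R :=
  (\sum_(y : Y) p x y * l g x y)%R.

Definition exp_risk {Y : finType} {G : Type} (P : probability X R) (p : X -> Y -> R)
  (l : G -> X -> Y -> R) (g : G) : \bar R :=
  \int[P]_x (cond_risk p l g x)%:E.

Definition best_risk {Y : finType} {G : Type} (P : probability X R) (p : X -> Y -> R)
  (l : G -> X -> Y -> R) (Gs : set G) : \bar R :=
  ereal_inf [set exp_risk P p l g | g in Gs].

Definition cond_best {Y : finType} {G : Type} (p : X -> Y -> R)
  (l : G -> X -> Y -> R) (Gs : set G) (x : X) : \bar R :=
  ereal_inf [set (cond_risk p l g x)%:E | g in Gs].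

Definition min_gap {Y : finType} {G : Type} (P : probability X R) (p : X -> Y -> R)
  (l : G -> X -> Y -> R) (Gs : set G) : \bar R :=
  best_risk P p l Gs - \int[P]_x cond_best p l Gs x.

Definition regret_gap {Y : finType} {G : Type} (P : probability X R) (p : X -> Y -> R)
  (l : G -> X -> Y -> R) (Gs : set G) (g : G) : \bar R :=
  exp_risk P p l g - best_risk P p l Gs + min_gap P p l Gs.

Definition admissible_Gamma (Gam : R -> R) : Prop :=
  Gam 0%R = 0%R /\
  (forall u v, (0 <= u)%R -> (u <= v)%R -> (Gam u <= Gam v)%R) /\
  (forall u v t, (0 <= u)%R -> (0 <= v)%R -> (0 <= t <= 1)%R ->
     (t * Gam u + (1 - t) * Gam v <= Gam (t * u + (1 - t) * v))%R).

(* When E_{l_s}(g) = +oo the right-hand side is +oo and the bound is trivial,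
   so only the case E_{l_s}(g) < +oo is required. *)
Definition consistency_bound {Y : finType} {G : Type} (Gs : set G)
  (ls lo : G -> X -> Y -> R) (Gam : R -> R) : Prop :=
  forall (P : probability X R) (p : X -> Y -> R), measurable_label_dist p ->
  forall g, Gs g -> exp_risk P p ls g < +oo ->
    regret_gap P p lo Gs g <= (Gam (fine (regret_gap P p ls Gs g)))%:E.

Definition inf_measurable {Y : finType} {G : Type} (l : G -> X -> Y -> R) (Gs : set G) : Prop :=
  forall p : X -> Y -> R, measurable_label_dist p ->
    measurable_fun [set: X] (fun x => cond_best p l Gs x : \bar R).

Definition defer_dec {ne : nat} (r : X -> 'I_ne.+1 -> R) (x : X) : 'I_ne.+1 :=
  [arg max_(j > ord0) r x j]%O.

Definition zero_one_bin (h : X -> 'I_2) (x : X) (y : 'I_2) : R := (h x != y)%:R.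

Definition zero_one_multi {ne : nat} (r : X -> 'I_ne.+1 -> R) (x : X) (k : 'I_ne.+1) : R :=
  (defer_dec r x != k)%:R.

(* expert j (j : 'I_ne, i.e. expert number j+1) cost c_j(x,y) = I_{h_j(x) <> y} *)
Definition cost {ne : nat} (experts : 'I_ne -> X -> 'I_2) (j : 'I_ne) (x : X) (y : 'I_2) : R :=
  (experts j x != y)%:R.

(* L_def(h,r,x,y); deferring to expert j+1 corresponds to class lift ord0 j *)
Definition L_def {ne : nat} (experts : 'I_ne -> X -> 'I_2)
  (g : (X -> 'I_2) * (X -> 'I_ne.+1 -> R)) (x : X) (y : 'I_2) : R :=
  ((g.1 x != y)%:R * (defer_dec g.2 x == ord0)%:R
   + \sum_(j < ne) cost experts j x y * (defer_dec g.2 x == lift ord0 j)%:R)%R.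

Definition L_def_h {ne : nat} (experts : 'I_ne -> X -> 'I_2) (h : X -> 'I_2)
  (r : X -> 'I_ne.+1 -> R) (x : X) (y : 'I_2) : R :=
  L_def experts (h, r) x y.

Definition L_surr {ne : nat} (experts : 'I_ne -> X -> 'I_2)
  (l2 : (X -> 'I_ne.+1 -> R) -> X -> 'I_ne.+1 -> R) (h : X -> 'I_2)
  (r : X -> 'I_ne.+1 -> R) (x : X) (y : 'I_2) : R :=
  ((h x == y)%:R * l2 r x ord0
   + \sum_(j < ne) (1 - cost experts j x y) * l2 r x (lift ord0 j))%R.

End Defs.

(* Main.v *)
Require Import Defs.
From HB Require Import structures.
From mathcomp Require Import all_boot all_order all_algebra.
From mathcomp Require Import all_classical all_reals all_analysis.
From mathcomp Require Import measurable_realfun lebesgue_measure lebesgue_integral probability.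
From mathcomp Require Import ring lra.

Set Implicit Arguments.
Unset Strict Implicit.
Unset Printing Implicit Defensive.
Import Order.TTheory GRing.Theory Num.Theory.
Local Open Scope classical_set_scope.
Local Open Scope ring_scope.
Local Open Scope ereal_scope.

Section Meas.
Context {R : realType} {d : measure_display} {X : measurableType d}.

Definition finmeas {T : finType} (g : X -> T) := forall t, measurable (g @^-1` [set t]).

Lemma finmeas_pre (T : finType) (g : X -> T) A : finmeas g -> measurable (g @^-1` A).
Proof.
move=> mg; have -> : g @^-1` A = \bigcup_(t in A) g @^-1` [set t].
  by apply/seteqP; split => x /=; [move=> Ax; exists (g x)|case=> t At /= ->].
by apply: fin_bigcup_measurable => //; exact: finite_finset.
Qed.

Lemma finmeas_fun (T : finType) (g : X -> T) (F : T -> R) : finmeas g ->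
  measurable_fun setT (fun x => F (g x)).
Proof. by move=> mg _ Y _; rewrite setTI; exact: (finmeas_pre (F @^-1` Y) mg). Qed.

Lemma finmeas_dec ne (r : X -> 'I_ne.+1 -> R) :
  (forall k, measurable_fun setT (fun x => r x k)) -> finmeas (defer_dec r).
Proof.
move=> mr.
pose cmat x := [ffun ij : 'I_ne.+1 * 'I_ne.+1 => (r x ij.1 <= r x ij.2)%R].
pose G (C : {ffun 'I_ne.+1 * 'I_ne.+1 -> bool}) :=
  odflt ord0 [pick i | [forall j, C (j, i)]].
have decE x : defer_dec r x = G (cmat x).
  rewrite /defer_dec /Order.arg_max /extremum /G; congr odflt; apply: eq_pick => i /=.
  by apply: eq_forallb => j; rewrite ffunE.
have mc : finmeas cmat.
  move=> C; have -> : cmat @^-1` [set C] =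
      \bigcap_(ij in [set: 'I_ne.+1 * 'I_ne.+1]) ((fun x => (r x ij.1 <= r x ij.2)%R) @^-1` [set C ij]).
    apply/seteqP; split => x /=.
      by move=> <- ij _ /=; rewrite ffunE.
    by move=> H; apply/ffunP => ij; rewrite ffunE; exact: H.
  apply: fin_bigcap_measurable; first exact: finite_finset.
  move=> ij _; rewrite -[X in measurable X]setTI.
  by apply: measurable_fun_ler => //.
move=> k; have -> : defer_dec r @^-1` [set k] = cmat @^-1` (G @^-1` [set k]).
  by apply/seteqP; split => x /=; rewrite decE.
exact: finmeas_pre.
Qed.

End Meas.
Section RealPart.
Context {R : realType}.
Local Open Scope ring_scope.

Lemma three_slope (Gam : R -> R) u M t : admissible_Gamma Gam ->
  0 <= u -> u < M -> M < t ->
  (Gam t - Gam M) / (t - M) <= (Gam M - Gam u) / (M - u).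
Proof.
move=> [G0 [Gmono Gconc]] u0 uM Mt.
have tu : 0 < t - u by lra.
pose lam := (t - M) / (t - u).
have l0 : 0 <= lam <= 1.
  apply/andP; split; first by apply: divr_ge0; lra.
  by rewrite ler_pdivrMr //; lra.
have := Gconc u t lam u0 (ltW (lt_trans (le_lt_trans u0 uM) Mt)) l0.
have -> : lam * u + (1 - lam) * t = M.
  by rewrite /lam; field; lra.
move=> h.
have h2 : (t - M) * Gam u + (M - u) * Gam t <= (t - u) * Gam M.
  have e : (t - u) * (lam * Gam u + (1 - lam) * Gam t) =
           (t - M) * Gam u + (M - u) * Gam t.
    by rewrite /lam; field; lra.
  rewrite -e; apply: ler_wpM2l; lra.
rewrite ler_pdivrMr; last lra.
rewrite mulrAC ler_pdivlMr; last lra.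
nra.
Qed.

Lemma support_line (Gam : R -> R) M : admissible_Gamma Gam -> 0 < M ->
  exists s, 0 <= s /\ forall t, 0 <= t -> Gam t <= Gam M + s * (t - M).
Proof.
move=> GA M0; have [G0 [Gmono Gconc]] := GA.
pose E := [set (Gam M - Gam u) / (M - u) | u in [set u | 0 <= u < M]].
have lb0 : lbound E 0.
  move=> _ [u /andP[u0 uM] <-]; apply: divr_ge0; rewrite subr_ge0.
    by apply: Gmono => //; exact: ltW.
  exact: ltW.
have En : nonempty E by exists ((Gam M - Gam 0) / (M - 0)); exists 0 => //=; rewrite lexx M0.
exists (inf E); split; first exact: lb_le_inf.
move=> t t0; case: (ltgtP t M) => [tM|Mt|->].
- have : inf E <= (Gam M - Gam t) / (M - t).
    apply: ge_inf; first by exists 0.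
    by exists t => //=; rewrite t0 tM.
  rewrite ler_pdivlMr ?subr_gt0 // => h; nra.
- have : (Gam t - Gam M) / (t - M) <= inf E.
    apply: lb_le_inf => // _ [u /andP[u0 uM] <-]; exact: three_slope.
  rewrite ler_pdivrMr ?subr_gt0 // => h; nra.
- by rewrite subrr mulr0 addr0.
Qed.

Lemma persp_mono (Gam : R -> R) (W n f : R) : admissible_Gamma Gam ->
  0 < W -> W <= n -> 0 <= f -> W * Gam (f / W) <= n * Gam (f / n).
Proof.
move=> [G0 [Gmono Gconc]] W0 Wn f0.
have n0 : 0 < n by lra.
have t01 : 0 <= W / n <= 1.
  by apply/andP; split; [apply: divr_ge0; lra | rewrite ler_pdivrMr //; lra].
have := Gconc (f / W) 0 (W / n) (divr_ge0 f0 (ltW W0)) (lexx 0) t01.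
rewrite G0 !mulr0 !addr0.
have -> : W / n * (f / W) = f / n by field; lra.
move=> h.
have : n * (W / n * Gam (f / W)) <= n * Gam (f / n) by apply: ler_wpM2l; lra.
have -> : n * (W / n * Gam (f / W)) = W * Gam (f / W) by field; lra.
done.
Qed.

End RealPart.
Section Alg.
Local Open Scope ring_scope.
Context {R : realType}.

Lemma sum_eq1 (T : finType) (F : T -> R) t : \sum_y F y * (t == y)%:R = F t.
Proof.
rewrite (bigD1 t) //= eqxx mulr1 big1 ?addr0 // => y /negbTE yt.
by rewrite eq_sym yt mulr0.
Qed.

Lemma sum_neq1 (T : finType) (F : T -> R) t :
  \sum_y F y * (t != y)%:R = \sum_y F y - F t.
Proof.
rewrite -(sum_eq1 F t) -sumrB; apply: eq_bigr => y _.
by case: eqP => _ /=; rewrite ?mulr1 ?mulr0 ?subr0 ?subrr.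
Qed.

Lemma one_le_sum (T : finType) (F : T -> R) a :
  (forall y, 0 <= F y) -> F a <= \sum_y F y.
Proof. by move=> F0; rewrite (bigD1 a) //= lerDl sumr_ge0. Qed.

Lemma two_le_sum (T : finType) (F : T -> R) a b :
  (forall y, 0 <= F y) -> a != b -> F a + F b <= \sum_y F y.
Proof.
move=> F0 ab; rewrite (bigD1 a) //= (bigD1 b) /=; last by rewrite eq_sym.
by rewrite addrA lerDl sumr_ge0.
Qed.
End Alg.

Section Losses.
Local Open Scope ring_scope.
Context {R : realType} {d : measure_display} {X : measurableType d}.
Variables (ne : nat) (experts : 'I_ne -> X -> 'I_2).

Definition predk (h : X -> 'I_2) (k : 'I_ne.+1) : X -> 'I_2 :=
  if unlift ord0 k is Some j then experts j else h.

Lemma predk0 h : predk h ord0 = h.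
Proof. by rewrite /predk unlift_none. Qed.

Lemma predkS h j : predk h (lift ord0 j) = experts j.
Proof. by rewrite /predk liftK. Qed.

Lemma L_surrE (l2 : (X -> 'I_ne.+1 -> R) -> X -> 'I_ne.+1 -> R) h r x y :
  L_surr experts l2 h r x y = \sum_k (predk h k x == y)%:R * l2 r x k.
Proof.
rewrite /L_surr big_ord_recl predk0; congr (_ + _); apply: eq_bigr => j _.
by rewrite predkS /cost; case: (experts j x == y); rewrite /= ?subr0 ?subrr.
Qed.

Lemma L_defE h (r : X -> 'I_ne.+1 -> R) x y :
  L_def experts (h, r) x y = (predk h (defer_dec r x) x != y)%:R.
Proof.
rewrite /L_def /=; case: (unliftP ord0 (defer_dec r x)) => [j ->|->].
- have -> : (lift ord0 j == ord0) = false by apply/negbTE; rewrite eq_sym neq_lift.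
  rewrite predkS mulr0 add0r.
  under eq_bigr do rewrite (inj_eq lift_inj).
  by rewrite sum_eq1.
- rewrite predk0 eqxx mulr1 big1 ?addr0 // => i _.
  by rewrite (negbTE (neq_lift _ _)) mulr0.
Qed.

Lemma cr_def (eta : X -> 'I_2 -> R) h r x : label_dist eta ->
  cond_risk eta (L_def experts) (h, r) x = 1 - eta x (predk h (defer_dec r x) x).
Proof.
move=> [_ e1]; rewrite /cond_risk.
under eq_bigr do rewrite L_defE.
by rewrite sum_neq1 e1.
Qed.

Lemma cr_surr (eta : X -> 'I_2 -> R) l2 h r x :
  cond_risk eta (L_surr experts l2 h) r x =
  \sum_k eta x (predk h k x) * l2 r x k.
Proof.
rewrite /cond_risk.
under eq_bigr do rewrite L_surrE mulr_sumr.
rewrite exchange_big; apply: eq_bigr => k _.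
rewrite -(sum_eq1 (fun y => eta x y) (predk h k x)) mulr_suml.
by apply: eq_bigr => y _; rewrite mulrA.
Qed.

End Losses.

Section Losses2.
Local Open Scope ring_scope.
Context {R : realType} {d : measure_display} {X : measurableType d}.

Lemma cr_bin (eta : X -> 'I_2 -> R) h x : label_dist eta ->
  cond_risk eta (zero_one_bin (R:=R)) h x = 1 - eta x (h x).
Proof. by move=> [_ e1]; rewrite /cond_risk /zero_one_bin sum_neq1 e1. Qed.

Lemma cr_multi ne (p : X -> 'I_ne.+1 -> R) r x : label_dist p ->
  cond_risk p zero_one_multi r x = 1 - p x (defer_dec r x).
Proof. by move=> [_ e1]; rewrite /cond_risk /zero_one_multi sum_neq1 e1. Qed.

End Losses2.
Section Inf.
Context {R : realType}.

Lemma inf_fin {G : Type} (Gs : set G) (f : G -> R) g0 : Gs g0 ->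
  (forall g, Gs g -> (0 <= f g)%R) ->
  let c := ereal_inf [set (f g)%:E | g in Gs] in
  c = (fine c)%:E /\ (0 <= fine c)%R /\ (forall g, Gs g -> (fine c <= f g)%R).
Proof.
move=> Gg0 f0 c.
have cle g : Gs g -> c <= (f g)%:E by move=> Gg; apply: ereal_inf_lbound; exists g.
have c0 : 0 <= c by apply: le_ereal_inf_tmp => _ [g Gg <-]; rewrite lee_fin f0.
have cf : c \is a fin_num by rewrite ge0_fin_numE // (le_lt_trans (cle _ Gg0)) // ltry.
split; first by rewrite fineK.
split; first exact: fine_ge0.
by move=> g Gg; rewrite -lee_fin fineK // cle.
Qed.

Lemma inf_lb {G : Type} (Gs : set G) (f : G -> R) g0 m : Gs g0 ->
  (forall g, Gs g -> (0 <= f g)%R) -> (forall g, Gs g -> (m <= f g)%R) ->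
  (m <= fine (ereal_inf [set (f g)%:E | g in Gs]))%R.
Proof.
move=> Gg0 f0 mf; have [ce _] := inf_fin Gg0 f0.
rewrite -lee_fin -ce; apply: le_ereal_inf_tmp => _ [g Gg <-]; by rewrite lee_fin mf.
Qed.
End Inf.

Section Regret.
Context {R : realType} {d : measure_display} {X : measurableType d}.

Lemma regret_dirac {Y : finType} {G : Type} (p : X -> Y -> R)
  (l : G -> X -> Y -> R) (Gs : set G) g x :
  Gs g -> (forall g', Gs g' -> measurable_fun setT (cond_risk p l g')) ->
  measurable_fun setT (cond_best p l Gs) ->
  (forall g' x, (0 <= cond_risk p l g' x)%R) ->
  regret_gap (\d_x : probability X R) p l Gs g =
    (cond_risk p l g x)%:E - cond_best p l Gs x.
Proof.
move=> Gg mcr mcb cr0.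
have eE g' : Gs g' -> exp_risk (\d_x : probability X R) p l g' = (cond_risk p l g' x)%:E.
  move=> Gg'; rewrite /exp_risk integral_dirac //=; first by rewrite diracT mul1e.
  by apply/measurable_EFinP; exact: mcr.
have bE : best_risk (\d_x : probability X R) p l Gs = cond_best p l Gs x.
  by rewrite /best_risk /cond_best; congr ereal_inf; apply: eq_imagel => g' Gg'; exact: eE.
have iE : \int[(\d_x : probability X R)]_y cond_best p l Gs y = cond_best p l Gs x.
  by rewrite integral_dirac // diracT mul1e.
have [cE _] := inf_fin (f := fun g => cond_risk p l g x) Gg (fun g _ => cr0 g x).
rewrite /regret_gap /min_gap bE iE eE // /cond_best cE subee // adde0 //.
Qed.

Lemma regret_int {Y : finType} {G : Type} (P : probability X R) (p : X -> Y -> R)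
  (l : G -> X -> Y -> R) (Gs : set G) g :
  Gs g -> measurable_fun setT (cond_risk p l g) ->
  measurable_fun setT (cond_best p l Gs) ->
  (forall g' x, (0 <= cond_risk p l g' x)%R) ->
  exp_risk P p l g < +oo ->
  [/\ regret_gap P p l Gs g =
      \int[P]_x ((cond_risk p l g x)%:E - (fine (cond_best p l Gs x))%:E),
     P.-integrable setT (EFin \o cond_risk p l g),
     P.-integrable setT (EFin \o (fun x => fine (cond_best p l Gs x))) &
     regret_gap P p l Gs g \is a fin_num].
Proof.
move=> Gg mcr mcb cr0 Efin.
set cr := cond_risk p l g; set cb := cond_best p l Gs.
have cbP x := inf_fin (f := fun g => cond_risk p l g x) Gg (fun g _ => cr0 g x).
have mcrE : measurable_fun setT (EFin \o cr) by apply/measurable_EFinP.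
have icr : P.-integrable setT (EFin \o cr).
  apply/integrableP; split => //.
  rewrite (eq_integral (fun x => (cr x)%:E)); first exact: Efin.
  by move=> x _ /=; rewrite ger0_norm ?cr0.
have mcbR : measurable_fun setT (fun x => fine (cb x)).
  exact: (measurableT_comp (fine_measurable measurableT) mcb).
have icb : P.-integrable setT (EFin \o (fun x => fine (cb x))).
  apply: le_integrable icr => //; first by apply/measurable_EFinP.
  move=> x _ /=; have [_ [c0 cl]] := cbP x.
  by rewrite /= lee_fin !ger0_norm ?cr0 //; exact: cl.
have intcb : \int[P]_x cb x = \int[P]_x (fine (cb x))%:E.
  by apply: eq_integral => x _; have [ce _] := cbP x; exact: ce.
have E0 g' : 0 <= exp_risk P p l g' by apply: integral_ge0 => x _; rewrite lee_fin.
have Bfin : best_risk P p l Gs \is a fin_num.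
  rewrite ge0_fin_numE; last by apply: le_ereal_inf_tmp => _ [g' _ <-].
  apply: le_lt_trans Efin; apply: ereal_inf_lbound; by exists g.
have Efin' : exp_risk P p l g \is a fin_num by rewrite ge0_fin_numE.
have Ifin : \int[P]_x cb x \is a fin_num.
  rewrite intcb; apply: integrable_fin_num => //.
have eq1 : regret_gap P p l Gs g = exp_risk P p l g - \int[P]_x cb x.
  rewrite /regret_gap /min_gap.
  rewrite -(fineK Efin') -(fineK Bfin) -(fineK Ifin) -!EFinB -EFinD; congr EFin.
  by rewrite addrA subrK.
have eq2 : regret_gap P p l Gs g =
      \int[P]_x ((cr x)%:E - (fine (cb x))%:E).
  by rewrite eq1 intcb (integralB_EFin _ icr icb).
split => //.
by rewrite eq1 fin_numB Efin' Ifin.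
Qed.

End Regret.

Section ExpDirac.
Context {R : realType} {d : measure_display} {X : measurableType d}.
Lemma exp_dirac {Y : finType} {G : Type} (p : X -> Y -> R)
  (l : G -> X -> Y -> R) g x :
  measurable_fun setT (cond_risk p l g) ->
  exp_risk (\d_x : probability X R) p l g = (cond_risk p l g x)%:E.
Proof.
move=> mcr; rewrite /exp_risk integral_dirac //=; first by rewrite diracT mul1e.
by apply/measurable_EFinP.
Qed.

Lemma cr_ge0 {Y : finType} {G : Type} (p : X -> Y -> R) (l : G -> X -> Y -> R) g x :
  label_dist p -> (forall g x y, (0 <= l g x y)%R) -> (0 <= cond_risk p l g x)%R.
Proof.
by move=> [p0 _] l0; apply: sumr_ge0 => y _; apply: mulr_ge0.
Qed.
End ExpDirac.
Section Core.
Context {R : realType} {d : measure_display} {X : measurableType d}.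

Lemma int_cst (P : probability X R) (c : R) : \int[P]_x c%:E = c%:E.
Proof. by rewrite integral_cst // (_ : _ [set: X] = 1) ?mule1 //; exact: probability_setT. Qed.

Lemma core_lin (P : probability X R) (u f : X -> R) (a : R) :
  P.-integrable setT (EFin \o u) -> P.-integrable setT (EFin \o f) ->
  (forall x, (u x <= a * f x)%R) ->
  \int[P]_x (u x)%:E <= (a * fine (\int[P]_x (f x)%:E))%:E.
Proof.
move=> iu iF uf.
have ifin : \int[P]_x (f x)%:E \is a fin_num by exact: integrable_fin_num.
rewrite EFinM fineK // -integralZl //.
apply: le_integral => //; first exact: integrableZl.
by move=> x _; rewrite -EFinM lee_fin.
Qed.

Lemma core_gen (P : probability X R) (u f : X -> R) (Gam : R -> R) (n : R) :
  admissible_Gamma Gam -> (1 <= n)%R ->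
  P.-integrable setT (EFin \o u) -> P.-integrable setT (EFin \o f) ->
  (forall x, (0 <= f x)%R) -> (forall x, (u x <= 1)%R) ->
  (forall x, (u x <= n * Gam (f x / n))%R) ->
  \int[P]_x (u x)%:E <= (n * Gam (fine (\int[P]_x (f x)%:E)))%:E.
Proof.
move=> GA n1 iu iF f0 u1 uG.
have [G0 [Gmono Gconc]] := GA.
set I := \int[P]_x (f x)%:E.
have ifin : I \is a fin_num by exact: integrable_fin_num.
have I0 : (0 <= fine I)%R by apply: fine_ge0; apply: integral_ge0 => x _; rewrite lee_fin.
have [Ipos|Ineg|Ieq] := ltgtP 0%R (fine I).
- have [s [s0 sl]] := support_line GA Ipos.
  pose c := (n * Gam (fine I) - n * s * fine I)%R.
  have iuc : P.-integrable setT (EFin \o (fun x => u x - c)%R).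
    rewrite (_ : EFin \o _ = (EFin \o u) \- (EFin \o cst c)); last first.
      by apply/funext => x /=; rewrite EFinB.
    by apply: integrableB => //; exact: finite_measure_integrable_cst.
  have h1 : \int[P]_x ((u x - c)%R)%:E <= (s * fine I)%:E.
    apply: core_lin => // x.
    have := sl (f x / n)%R (divr_ge0 (f0 x) (le_trans ler01 n1)).
    have := uG x.
    have n0 : (0 < n)%R by lra.
    move=> h2 h3.
    have : (n * Gam (f x / n) <= n * (Gam (fine I) + s * (f x / n - fine I)))%R.
      by apply: ler_wpM2l => //; lra.
    have -> : (n * (Gam (fine I) + s * (f x / n - fine I)) = 
               n * Gam (fine I) + s * f x - n * s * fine I)%R.
      by field; lra.
    rewrite /c; lra.
  have e : \int[P]_x (u x)%:E = \int[P]_x ((u x - c)%R)%:E + c%:E.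
    rewrite -(int_cst P c) -integralD_EFin //; last exact: finite_measure_integrable_cst.
    by apply: eq_integral => x _ /=; rewrite -EFinD subrK.
  rewrite e; apply: le_trans (leeD h1 (lexx _)) _.
  rewrite -EFinD lee_fin /c.
  have : (0 <= s * fine I)%R by apply: mulr_ge0 => //; lra.
  have : (s * fine I <= n * (s * fine I))%R by rewrite ler_peMl //; apply: mulr_ge0 => //; lra.
  move=> h4 h5; rewrite -mulrA; lra.
- by move: Ineg; rewrite ltNge I0.
- (* the integral of f is zero: f = 0 a.e. *)
  have mf : measurable_fun setT (EFin \o f) by exact: measurable_int iF.
  have : \int[P]_x `|(EFin \o f) x| = 0.
    rewrite (eq_integral (fun x => (f x)%:E)); last first.
      by move=> x _ /=; rewrite ger0_norm.
    by rewrite -/I -(fineK ifin) -Ieq.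
  move/(ae_eq_integral_abs P measurableT mf) => [A [mA PA sub]].
  have : \int[P]_x (u x)%:E <= \int[P]_x (\1_A x)%:E.
    apply: le_integral => //; first exact: integrable_indic.
    move=> x _; rewrite lee_fin indicE.
    case: (boolP (x \in A)) => xA /=; first exact: u1.
    have fx0 : f x = 0%R.
      case: (eqVneq (f x) 0%R) => // fx.
      have Ax : A x.
        by apply: sub => /= /(_ Logic.I) [] fx0; move: fx; rewrite fx0 eqxx.
      by move: xA; rewrite mem_set.
    by have := uG x; rewrite fx0 mul0r G0 mulr0.
  move=> hle; apply: le_trans hle _.
  by rewrite integral_indic // setIT PA -Ieq G0 mulr0.
Qed.

End Core.
Section Point.
Context {R : realType} {d : measure_display} {X : measurableType d}.
Variables (ne : nat) (Rc : set (X -> 'I_ne.+1 -> R))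
  (l2 : (X -> 'I_ne.+1 -> R) -> X -> 'I_ne.+1 -> R) (Gam : R -> R).
Hypotheses (mr : forall r, Rc r -> forall k, measurable_fun [set: X] (fun x => r x k))
  (ml2 : forall r, Rc r -> forall k, measurable_fun [set: X] (fun x => l2 r x k))
  (l20 : forall r x k, (0 <= l2 r x k)%R)
  (iml2 : inf_measurable l2 Rc) (im01 : inf_measurable zero_one_multi Rc)
  (cb2 : consistency_bound Rc l2 zero_one_multi Gam).

Lemma point_gamma (pv : 'I_ne.+1 -> R) x r r' :
  (forall k, (0 <= pv k)%R) -> (\sum_k pv k = 1)%R -> Rc r -> Rc r' ->
  (pv (defer_dec r' x) - pv (defer_dec r x) <=
  Gam (\sum_k pv k * l2 r x k -
       fine (ereal_inf [set (\sum_k pv k * l2 r'' x k)%:E | r'' in Rc])))%R.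
Proof.
move=> pv0 pv1 Rr Rr'.
pose p : X -> 'I_ne.+1 -> R := fun _ => pv.
have lp : label_dist p by split.
have mp : measurable_label_dist p by split => // y; exact: measurable_cst.
have mcr01 g' : Rc g' -> measurable_fun setT (cond_risk p zero_one_multi g').
  move=> Rg'; apply: measurable_sum => k; apply: measurable_funM.
    exact: measurable_cst.
  exact: (finmeas_fun (fun t => (t != k)%:R) (finmeas_dec (mr Rg'))).
have mcr2 g' : Rc g' -> measurable_fun setT (cond_risk p l2 g').
  move=> Rg'; apply: measurable_sum => k; apply: measurable_funM.
    exact: measurable_cst.
  exact: ml2.
have cr01 g' y : (0 <= cond_risk p zero_one_multi g' y)%R.
  by apply: cr_ge0 => // ? ? ?; rewrite /zero_one_multi ler0n.
have cr2 g' y : (0 <= cond_risk p l2 g' y)%R by apply: cr_ge0.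
have h := @cb2 (\d_x : probability X R) p mp r Rr.
rewrite exp_dirac ?ltry in h; last exact: mcr2.
move: (h isT).
rewrite (regret_dirac _ Rr mcr01 (im01 mp) cr01).
rewrite (regret_dirac _ Rr mcr2 (iml2 mp) cr2).
have [cE1 [_ cl1]] := inf_fin (f := fun g => cond_risk p zero_one_multi g x) Rr (fun g _ => cr01 g x).
have [cE2 _] := inf_fin (f := fun g => cond_risk p l2 g x) Rr (fun g _ => cr2 g x).
rewrite /cond_best cE1 cE2 -!EFinB /= lee_fin cr_multi //.
have := cl1 r' Rr'; rewrite cr_multi // => h1 h2.
by apply: le_trans h2; move: h1; rewrite /p => h1; lra.
Qed.

End Point.
Section Key.
Context {R : realType} {d : measure_display} {X : measurableType d}.
Variables (ne : nat) (experts : 'I_ne -> X -> 'I_2) (Rc : set (X -> 'I_ne.+1 -> R))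
  (l2 : (X -> 'I_ne.+1 -> R) -> X -> 'I_ne.+1 -> R) (Gam : R -> R)
  (eta : X -> 'I_2 -> R).
Hypotheses (mr : forall r, Rc r -> forall k, measurable_fun [set: X] (fun x => r x k))
  (ml2 : forall r, Rc r -> forall k, measurable_fun [set: X] (fun x => l2 r x k))
  (l20 : forall r x k, (0 <= l2 r x k)%R)
  (iml2 : inf_measurable l2 Rc) (im01 : inf_measurable zero_one_multi Rc)
  (cb2 : consistency_bound Rc l2 zero_one_multi Gam)
  (GA : admissible_Gamma Gam) (leta : label_dist eta).

Local Open Scope ring_scope.

Definition Sst h x := fine (cond_best eta (L_surr experts l2 h) Rc x).

Lemma surr_ge0 h r x : 0 <= cond_risk eta (L_surr experts l2 h) r x.
Proof.
apply: cr_ge0 => // g y k; rewrite L_surrE; apply: sumr_ge0 => i _.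
by apply: mulr_ge0 => //; rewrite ler0n.
Qed.

Lemma def_ge0 h r x : 0 <= cond_risk eta (L_def_h experts h) r x.
Proof. by apply: cr_ge0 => // g y k; rewrite /L_def_h L_defE ler0n. Qed.

Lemma key h x r r' : Rc r -> Rc r' ->
  eta x (predk experts h (defer_dec r x) x) < eta x (predk experts h (defer_dec r' x) x) ->
  let q k := eta x (predk experts h k x) in
  let W := \sum_k q k in
  [/\ 0 < W, W <= ne%:R &
   q (defer_dec r' x) - q (defer_dec r x) <=
   W * Gam ((cond_risk eta (L_surr experts l2 h) r x - Sst h x) / W)].
Proof.
move=> Rr Rr' qlt q W.
have [G0 [Gmono Gconc]] := GA.
have [eta0 eta1] := leta.
have q0 k : 0 <= q k by exact: eta0.
have q1 k : q k <= 1 by rewrite /q -(eta1 x); apply: one_le_sum => y; exact: eta0.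
have W0 : 0 < W.
  apply: (lt_le_trans _ (one_le_sum (defer_dec r' x) q0)).
  exact: le_lt_trans (q0 _) qlt.
split => //.
- set a := defer_dec r' x; set b := defer_dec r x.
  have pab : predk experts h a x != predk experts h b x.
    by apply/negP => /eqP e; move: qlt; rewrite -/a -/b e ltxx.
  have ab : a != b by apply: contraNneq pab => ->.
  have qab : q a + q b <= 1 by rewrite /q -(eta1 x); exact: two_le_sum (eta0 x) pab.
  have nn k : 0 <= 1 - q k by rewrite subr_ge0.
  have := two_le_sum (F := fun k => 1 - q k) nn ab.
  rewrite sumrB sumr_const card_ord -/W.
  have e : (1 *+ ne.+1 : R) = ne%:R + 1 by rewrite -addn1 natrD.
  rewrite e; lra.
- pose pv k := q k / W.
  have Wn0 : W != 0 by rewrite gt_eqF.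
  have pv0 k : 0 <= pv k by apply: divr_ge0 => //; exact: ltW.
  have pv1 : \sum_k pv k = 1 by rewrite /pv -mulr_suml divff.
  have hg := point_gamma mr ml2 l20 iml2 im01 cb2 x pv0 pv1 Rr Rr'.
  have eS r'' : \sum_k pv k * l2 r'' x k = cond_risk eta (L_surr experts l2 h) r'' x / W.
    by rewrite cr_surr /pv mulr_suml; apply: eq_bigr => k _; rewrite mulrAC.
  have [_ [Sst0 Sstl]] := inf_fin (f := fun r'' => cond_risk eta (L_surr experts l2 h) r'' x)
     Rr (fun g _ => surr_ge0 h g x).
  have pvS0 g : Rc g -> 0 <= \sum_k pv k * l2 g x k.
    by move=> _; apply: sumr_ge0 => k _; apply: mulr_ge0.
  have lb : Sst h x / W <=
      fine (ereal_inf [set (\sum_k pv k * l2 r'' x k)%:E | r'' in Rc]).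
    apply: (inf_lb Rr pvS0) => g Rg; rewrite eS.
    by apply: ler_wpM2r; [rewrite invr_ge0; exact: ltW | exact: Sstl].
  have [_ [_ ub]] := inf_fin (f := fun r'' => \sum_k pv k * l2 r'' x k) Rr pvS0.
  have ub' := ub r Rr.
  set arg := (X in Gam X) in hg.
  have arg0 : 0 <= arg by rewrite /arg subr_ge0.
  have argl : arg <= (cond_risk eta (L_surr experts l2 h) r x - Sst h x) / W.
    by rewrite /arg eS mulrBl; lra.
  have := Gmono _ _ arg0 argl => hG.
  have e : q (defer_dec r' x) - q (defer_dec r x) =
           W * (pv (defer_dec r' x) - pv (defer_dec r x)).
    by rewrite /pv; field.
  rewrite e; apply: ler_wpM2l; first exact: ltW.
  exact: le_trans hg hG.
Qed.

Lemma cr_def_h h r x :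
  cond_risk eta (L_def_h experts h) r x = 1 - eta x (predk experts h (defer_dec r x) x).
Proof. exact: cr_def. Qed.

Lemma T_bound h x r (Phi : R -> R) : Rc r ->
  (forall W f, 0 < W -> W <= ne%:R -> 0 <= f -> W * Gam (f / W) <= Phi f) ->
  (forall f, 0 <= f -> 0 <= Phi f) ->
  cond_risk eta (L_def_h experts h) r x - fine (cond_best eta (L_def_h experts h) Rc x) <=
  Phi (cond_risk eta (L_surr experts l2 h) r x - Sst h x).
Proof.
move=> Rr HP HP0.
have [_ [_ Sstl]] := inf_fin (f := fun r'' => cond_risk eta (L_surr experts l2 h) r'' x)
     Rr (fun g _ => surr_ge0 h g x).
set f := _ - Sst h x.
have f0 : 0 <= f by rewrite /f subr_ge0; exact: Sstl.
suff : cond_risk eta (L_def_h experts h) r x - Phi f <=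
       fine (cond_best eta (L_def_h experts h) Rc x) by lra.
apply: (inf_lb Rr (fun g _ => def_ge0 h g x)) => r' Rr'.
rewrite !cr_def_h.
case: (leP (eta x (predk experts h (defer_dec r' x) x))
           (eta x (predk experts h (defer_dec r x) x))) => [le|lt].
  by have := HP0 f f0; lra.
have [W0 Wn hk] := key Rr Rr' lt.
by have := HP _ _ W0 Wn f0; rewrite -/f; lra.
Qed.

End Key.
Section MeasLoss.
Context {R : realType} {d : measure_display} {X : measurableType d}.
Variables (ne : nat) (experts : 'I_ne -> X -> 'I_2) (eta : X -> 'I_2 -> R).
Hypotheses (me : forall j (y : 'I_2), measurable (experts j @^-1` [set y]))
  (meta : measurable_label_dist eta).
Local Open Scope ring_scope.

Lemma finmeas_predk (h : X -> 'I_2) k :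
  (forall y, measurable (h @^-1` [set y])) -> finmeas (predk experts h k).
Proof. by move=> mh; rewrite /predk; case: (unlift ord0 k) => [j|] y; [exact: me | exact: mh]. Qed.

Lemma meas_etag (g : X -> 'I_2) : finmeas g -> measurable_fun setT (fun x => eta x (g x)).
Proof.
move=> mg; rewrite (_ : (fun x => _) = fun x => \sum_y eta x y * (g x == y)%:R); last first.
  by apply/funext => x; rewrite sum_eq1.
apply: measurable_sum => y; apply: measurable_funM; first exact: meta.2.
exact: (finmeas_fun (fun t => (t == y)%:R) mg).
Qed.

Lemma mcr_def (h : X -> 'I_2) (r : X -> 'I_ne.+1 -> R) :
  (forall y, measurable (h @^-1` [set y])) ->
  (forall k, measurable_fun setT (fun x => r x k)) ->
  measurable_fun setT (cond_risk eta (L_def experts) (h, r)).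
Proof.
move=> mh mr.
rewrite (_ : cond_risk _ _ _ = fun x => 1 - \sum_k eta x (predk experts h k x) * (defer_dec r x == k)%:R); last first.
  by apply/funext => x; rewrite cr_def ?sum_eq1 //; exact: meta.1.
apply: measurable_funB; first exact: measurable_cst.
apply: measurable_sum => k; apply: measurable_funM.
  exact: meas_etag (finmeas_predk _ mh).
exact: (finmeas_fun (fun t => (t == k)%:R) (finmeas_dec mr)).
Qed.

Lemma mcr_bin (h : X -> 'I_2) : (forall y, measurable (h @^-1` [set y])) ->
  measurable_fun setT (cond_risk eta (zero_one_bin (R:=R)) h).
Proof.
move=> mh; rewrite (_ : cond_risk _ _ _ = fun x => 1 - eta x (h x)); last first.
  by apply/funext => x; rewrite cr_bin //; exact: meta.1.
by apply: measurable_funB; [exact: measurable_cst | exact: meas_etag].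
Qed.

Lemma mcr_surr l2 (h : X -> 'I_2) (r : X -> 'I_ne.+1 -> R) :
  (forall y, measurable (h @^-1` [set y])) ->
  (forall k, measurable_fun setT (fun x => l2 r x k)) ->
  measurable_fun setT (cond_risk eta (L_surr experts l2 h) r).
Proof.
move=> mh ml; rewrite (_ : cond_risk _ _ _ = fun x => \sum_k eta x (predk experts h k x) * l2 r x k); last first.
  by apply/funext => x; rewrite cr_surr.
apply: measurable_sum => k; apply: measurable_funM; last exact: ml.
exact: meas_etag (finmeas_predk _ mh).
Qed.

Lemma mcr_gen {Y : finType} {G : Type} (p : X -> Y -> R) (l : G -> X -> Y -> R) g :
  (forall y, measurable_fun setT (fun x => p x y)) ->
  (forall y, measurable_fun setT (fun x => l g x y)) ->
  measurable_fun setT (cond_risk p l g).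
Proof.
move=> mp ml; apply: measurable_sum => y; apply: measurable_funM; [exact: mp | exact: ml].
Qed.

Lemma exp_bnd (P : probability X R) (c : X -> R) : measurable_fun setT c ->
  (forall x, 0 <= c x <= 1) -> (\int[P]_x (c x)%:E < +oo)%E.
Proof.
move=> mc cb.
have hle : (\int[P]_x (c x)%:E <= \int[P]_x (1%R)%:E)%E.
  have m1 : measurable_fun setT (fun x => (c x)%:E) by apply/measurable_EFinP.
  apply: ge0_le_integral => //.
  - by move=> x _; rewrite lee_fin; case/andP: (cb x).
  - by move=> x _; rewrite lee_fin; case/andP: (cb x).
by apply: le_lt_trans hle _; rewrite int_cst ltry.
Qed.

End MeasLoss.
Section Final.
Context {R : realType} {d : measure_display} {X : measurableType d}.
Variables (ne : nat) (experts : 'I_ne -> X -> 'I_2)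
  (H : set (X -> 'I_2)) (Rc : set (X -> 'I_ne.+1 -> R))
  (l1 : (X -> 'I_2) -> X -> 'I_2 -> R)
  (l2 : (X -> 'I_ne.+1 -> R) -> X -> 'I_ne.+1 -> R)
  (Gamma1 Gamma2 : R -> R) (P : probability X R) (eta : X -> 'I_2 -> R).
Hypotheses (meta : measurable_label_dist eta)
  (me : forall j (y : 'I_2), measurable (experts j @^-1` [set y]))
  (mh : forall h, H h -> forall y : 'I_2, measurable (h @^-1` [set y]))
  (mr : forall r, Rc r -> forall k : 'I_ne.+1, measurable_fun [set: X] (fun x => r x k))
  (ml1 : forall h, H h -> forall y : 'I_2, measurable_fun [set: X] (fun x => l1 h x y))
  (ml2 : forall r, Rc r -> forall k : 'I_ne.+1, measurable_fun [set: X] (fun x => l2 r x k))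
  (l10 : forall h x y, (0 <= l1 h x y)%R)
  (l20 : forall r x k, (0 <= l2 r x k)%R)
  (im01b : inf_measurable (zero_one_bin (R:=R)) H)
  (iml2 : inf_measurable l2 Rc) (im01 : inf_measurable zero_one_multi Rc)
  (imdef : inf_measurable (L_def experts) (H `*` Rc))
  (imsurr : forall h, H h -> inf_measurable (L_surr experts l2 h) Rc)
  (imdefh : forall h, H h -> inf_measurable (L_def_h experts h) Rc)
  (GA2 : admissible_Gamma Gamma2)
  (cb1 : consistency_bound H l1 (zero_one_bin (R:=R)) Gamma1)
  (cb2 : consistency_bound Rc l2 zero_one_multi Gamma2).

Variables (Phi Psi : R -> R).
Hypotheses (HP : forall W f, (0 < W)%R -> (W <= ne%:R)%R -> (0 <= f)%R ->
                 (W * Gamma2 (f / W) <= Phi f)%R)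
  (HP0 : forall f, (0 <= f)%R -> (0 <= Phi f)%R)
  (HJ : forall u f : X -> R, P.-integrable setT (EFin \o u) -> P.-integrable setT (EFin \o f) ->
     (forall x, 0 <= f x)%R -> (forall x, u x <= 1)%R -> (forall x, u x <= Phi (f x))%R ->
     \int[P]_x (u x)%:E <= (Psi (fine (\int[P]_x (f x)%:E)))%:E).

Let leta : label_dist eta := meta.1.

Let iEB (f1 f2 : X -> R) : P.-integrable setT (EFin \o f1) ->
  P.-integrable setT (EFin \o f2) ->
  P.-integrable setT (EFin \o (fun x => f1 x - f2 x)%R).
Proof.
move=> i1 i2; rewrite (_ : EFin \o _ = (EFin \o f1) \- (EFin \o f2)).
  exact: integrableB.
by apply/funext => x /=; rewrite EFinB.
Qed.

Let eta_le1 x y : (eta x y <= 1)%R.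
Proof. by rewrite -(leta.2 x); apply: one_le_sum => z; exact: leta.1. Qed.

Let crD0 g x : (0 <= cond_risk eta (L_def experts) g x)%R.
Proof. by apply: cr_ge0 => // -[? ?] ? ?; rewrite L_defE ler0n. Qed.

Let crDh0 h g x : (0 <= cond_risk eta (L_def_h experts h) g x)%R.
Proof. exact: (crD0 (h, g) x). Qed.

Let crZ0 g x : (0 <= cond_risk eta (zero_one_bin (R:=R)) g x)%R.
Proof. by apply: cr_ge0 => // ? ? ?; rewrite /zero_one_bin ler0n. Qed.

Let crS0 h g x : (0 <= cond_risk eta (L_surr experts l2 h) g x)%R.
Proof. exact: surr_ge0. Qed.

Let finD h r : H h -> Rc r -> exp_risk P eta (L_def experts) (h, r) < +oo.
Proof.
move=> Hh Rr; apply: exp_bnd; first exact: mcr_def (mh Hh) (mr Rr).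
move=> x; rewrite cr_def //; apply/andP; split.
  by rewrite subr_ge0.
by rewrite lerBlDr lerDl; exact: leta.1.
Qed.

Let surr_part h r : H h -> Rc r -> exp_risk P eta (L_surr experts l2 h) r < +oo ->
  let fS := fun x => (cond_risk eta (L_surr experts l2 h) r x -
                      fine (cond_best eta (L_surr experts l2 h) Rc x))%R in
  [/\ P.-integrable setT (EFin \o fS),
      fine (regret_gap P eta (L_surr experts l2 h) Rc r) = fine (\int[P]_x (fS x)%:E) &
      forall x, (0 <= fS x)%R].
Proof.
move=> Hh Rr fin2 fS.
have mS := mcr_surr me meta (mh Hh) (ml2 Rr).
have [eqS iS iSs _] := regret_int Rr mS (imsurr Hh meta) (crS0 h) fin2.
split.
- exact: iEB.
- by rewrite eqS; congr fine; apply: eq_integral => x _; rewrite EFinB.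
- move=> x; have [_ [_ Sl]] := inf_fin (f := fun g => cond_risk eta (L_surr experts l2 h) g x)
     Rr (fun g _ => crS0 h g x).
  by rewrite /fS subr_ge0; exact: Sl.
Qed.

Let Tb h r x : Rc r ->
  (cond_risk eta (L_def_h experts h) r x - fine (cond_best eta (L_def_h experts h) Rc x) <=
  Phi (cond_risk eta (L_surr experts l2 h) r x - fine (cond_best eta (L_surr experts l2 h) Rc x)))%R.
Proof. by move=> Rr; exact: (T_bound experts mr ml2 l20 iml2 im01 cb2 GA2 leta h x Rr HP HP0). Qed.

Lemma conj1_gen h r : H h -> Rc r ->
  exp_risk P eta l1 h < +oo -> exp_risk P eta (L_surr experts l2 h) r < +oo ->
  regret_gap P eta (L_def experts) (H `*` Rc) (h, r) <=
  (Gamma1 (fine (regret_gap P eta l1 H h)) +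
   Psi (fine (regret_gap P eta (L_surr experts l2 h) Rc r)))%:E.
Proof.
move=> Hh Rr fin1 fin2.
have HRg : (H `*` Rc) (h, r) by split.
have mD := mcr_def me meta (mh Hh) (mr Rr).
have [eqD iD iDs _] := regret_int HRg mD (imdef meta) crD0 (finD Hh Rr).
have mZ := mcr_bin meta (mh Hh).
have finZ : exp_risk P eta (zero_one_bin (R:=R)) h < +oo.
  apply: exp_bnd => // x; rewrite cr_bin //; apply/andP; split.
    by rewrite subr_ge0.
  by rewrite lerBlDr lerDl; exact: leta.1.
have [eqZ iZ iZs _] := regret_int Hh mZ (im01b meta) crZ0 finZ.
have c1 := @cb1 P eta meta h Hh fin1.
have [iS eS fS0] := surr_part Hh Rr fin2.
set fS := (fun x => _) in iS eS fS0.
pose D x := cond_risk eta (L_def experts) (h, r) x.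
pose Dst x := fine (cond_best eta (L_def experts) (H `*` Rc) x).
pose Z x := cond_risk eta (zero_one_bin (R:=R)) h x.
pose Zst x := fine (cond_best eta (zero_one_bin (R:=R)) H x).
pose u x := ((D x - Dst x) - (Z x - Zst x))%R.
have iZ' := iEB iZ iZs.
have iD' := iEB iD iDs.
have iu : P.-integrable setT (EFin \o u) := iEB iD' iZ'.
have e1 : regret_gap P eta (L_def experts) (H `*` Rc) (h, r) =
    \int[P]_x ((EFin \o (fun x => Z x - Zst x)%R) x + (EFin \o u) x).
  rewrite eqD; apply: eq_integral => x _ /=.
  by rewrite /u -!EFinD; congr EFin; rewrite /D /Dst; lra.
rewrite e1 (integralD measurableT iZ' iu) EFinD.
apply: leeD.
  have -> : \int[P]_x (EFin \o (fun x => Z x - Zst x)%R) x =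
            regret_gap P eta (zero_one_bin (R:=R)) H h.
    by rewrite eqZ; apply: eq_integral => x _ /=; rewrite EFinB.
  exact: c1.
rewrite eS; apply: HJ => // x.
- have [_ [Dst0 _]] := inf_fin (f := fun g => cond_risk eta (L_def experts) g x) HRg (fun g _ => crD0 g x).
  have [_ [_ Zl]] := inf_fin (f := fun g => cond_risk eta (zero_one_bin (R:=R)) g x) Hh (fun g _ => crZ0 g x).
  have := Zl h Hh; rewrite /u /D /Dst /Z /Zst cr_def // => hz.
  have := leta.1 x (predk experts h (defer_dec r x) x); lra.
- have := Tb h x Rr.
  have [_ [_ Zl]] := inf_fin (f := fun g => cond_risk eta (zero_one_bin (R:=R)) g x) Hh (fun g _ => crZ0 g x).
  have [_ [_ Dhl]] := inf_fin (f := fun g => cond_risk eta (L_def_h experts h) g x) Rr (fun g _ => crDh0 h g x).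
  have lbD : (fine (cond_best eta (L_def_h experts h) Rc x) - (Z x - Zst x) <= Dst x)%R.
    apply: (inf_lb HRg (fun g _ => crD0 g x)) => -[h' r'] [/= Hh' Rr'].
    rewrite cr_def //; have := Dhl r' Rr'; rewrite cr_def_h //.
    have := Zl h' Hh'; rewrite cr_bin // /Z cr_bin //.
    have := Zl h Hh; rewrite cr_bin // => h0.
    rewrite /Zst /cond_best.
    case: (unliftP ord0 (defer_dec r' x)) => [j ->|->]; rewrite ?predkS ?predk0 => h1 h2; lra.
  rewrite /u /D /fS -/(cond_risk eta (L_def_h experts h) r x).
  move: lbD; rewrite -/(Dst x); lra.
Qed.

Lemma conj3_gen h0 : H = [set h0] -> forall r, Rc r ->
  exp_risk P eta (L_surr experts l2 h0) r < +oo ->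
  regret_gap P eta (L_def_h experts h0) Rc r <=
  (Psi (fine (regret_gap P eta (L_surr experts l2 h0) Rc r)))%:E.
Proof.
move=> HH r Rr fin2.
have Hh0 : H h0 by rewrite HH.
have mDh : measurable_fun setT (cond_risk eta (L_def_h experts h0) r).
  exact: (mcr_def me meta (mh Hh0) (mr Rr)).
have finDh : exp_risk P eta (L_def_h experts h0) r < +oo by exact: finD Hh0 Rr.
have [eqD iD iDs _] := regret_int Rr mDh (imdefh Hh0 meta) (crDh0 h0) finDh.
have [iS eS fS0] := surr_part Hh0 Rr fin2.
set fS := (fun x => _) in iS eS fS0.
pose u x := (cond_risk eta (L_def_h experts h0) r x -
             fine (cond_best eta (L_def_h experts h0) Rc x))%R.
have -> : regret_gap P eta (L_def_h experts h0) Rc r = \int[P]_x (u x)%:E.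
  by rewrite eqD; apply: eq_integral => x _; rewrite EFinB.
rewrite eS; apply: HJ => //.
- exact: iEB.
- move=> x; rewrite /u cr_def_h //.
  have [_ [D0 _]] := inf_fin (f := fun g => cond_risk eta (L_def_h experts h0) g x) Rr (fun g _ => crDh0 h0 g x).
  have := leta.1 x (predk experts h0 (defer_dec r x) x).
  move: D0; rewrite /cond_best; lra.
- by move=> x; exact: Tb.
Qed.

End Final.
Unset Implicit Arguments.

Theorem lemma1 (R : realType) (d : measure_display) (X : measurableType d)
  (ne : nat) (experts : 'I_ne -> X -> 'I_2)
  (H : set (X -> 'I_2)) (Rc : set (X -> 'I_ne.+1 -> R))
  (l1 : (X -> 'I_2) -> X -> 'I_2 -> R)
  (l2 : (X -> 'I_ne.+1 -> R) -> X -> 'I_ne.+1 -> R)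
  (Gamma1 Gamma2 : R -> R)
  (P : probability X R) (eta : X -> 'I_2 -> R) :
  (1 <= ne)%N ->
  (* the fixed distribution of (x, y): marginal P, conditional eta *)
  measurable_label_dist eta ->
  (* measurability of experts, hypotheses and surrogate losses; non-negativity of losses *)
  (forall j (y : 'I_2), measurable (experts j @^-1` [set y])) ->
  (forall h, H h -> forall y : 'I_2, measurable (h @^-1` [set y])) ->
  (forall r, Rc r -> forall k : 'I_ne.+1, measurable_fun [set: X] (fun x => r x k)) ->
  (forall h, H h -> forall y : 'I_2, measurable_fun [set: X] (fun x => l1 h x y)) ->
  (forall r, Rc r -> forall k : 'I_ne.+1, measurable_fun [set: X] (fun x => l2 r x k)) ->
  (forall h x y, (0 <= l1 h x y)%R) ->
  (forall r x k, (0 <= l2 r x k)%R) ->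
  (* regularity: pointwise infima of conditional risks are measurable *)
  inf_measurable l1 H -> inf_measurable (zero_one_bin (R:=R)) H ->
  inf_measurable l2 Rc -> inf_measurable zero_one_multi Rc ->
  inf_measurable (L_def experts) (H `*` Rc) ->
  (forall h, H h -> inf_measurable (L_surr experts l2 h) Rc) ->
  (forall h, H h -> inf_measurable (L_def_h experts h) Rc) ->
  (* consistency-bound assumptions *)
  admissible_Gamma Gamma1 -> admissible_Gamma Gamma2 ->
  consistency_bound H l1 (zero_one_bin (R:=R)) Gamma1 ->
  consistency_bound Rc l2 zero_one_multi Gamma2 ->
  (* main bound *)
  (forall h r, H h -> Rc r ->
     exp_risk P eta l1 h < +oo -> exp_risk P eta (L_surr experts l2 h) r < +oo ->
     regret_gap P eta (L_def experts) (H `*` Rc) (h, r) <=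
     (Gamma1 (fine (regret_gap P eta l1 H h))
      + ne%:R * Gamma2 (fine (regret_gap P eta (L_surr experts l2 h) Rc r)))%:E)
  /\
  (* the factor ne can be removed when Gamma2 is linear *)
  ((exists a : R, forall t, (0 <= t)%R -> Gamma2 t = (a * t)%R) ->
   forall h r, H h -> Rc r ->
     exp_risk P eta l1 h < +oo -> exp_risk P eta (L_surr experts l2 h) r < +oo ->
     regret_gap P eta (L_def experts) (H `*` Rc) (h, r) <=
     (Gamma1 (fine (regret_gap P eta l1 H h))
      + Gamma2 (fine (regret_gap P eta (L_surr experts l2 h) Rc r)))%:E)
  /\
  (* singleton case H = {h0}: R-consistency bound of L^h0_surr w.r.t. L^h0_def *)
  (forall h0, H = [set h0] ->
   forall r, Rc r -> exp_risk P eta (L_surr experts l2 h0) r < +oo ->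
     regret_gap P eta (L_def_h experts h0) Rc r <=
     (ne%:R * Gamma2 (fine (regret_gap P eta (L_surr experts l2 h0) Rc r)))%:E)
  /\
  ((exists a : R, forall t, (0 <= t)%R -> Gamma2 t = (a * t)%R) ->
   forall h0, H = [set h0] ->
   forall r, Rc r -> exp_risk P eta (L_surr experts l2 h0) r < +oo ->
     regret_gap P eta (L_def_h experts h0) Rc r <=
     (Gamma2 (fine (regret_gap P eta (L_surr experts l2 h0) Rc r)))%:E).
Proof.
move=> ne1 meta me mh mr ml1 ml2 l10 l20 iml1 im01b iml2 im01 imdef imsurr imdefh
  GA1 GA2 cb1 cb2.
have [G0 [Gmono Gconc]] := GA2.
have n1 : (1 <= ne%:R :> R)%R by rewrite ler1n.
have n0 : (0 < ne%:R :> R)%R by apply: lt_le_trans n1; exact: ltr01.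
have Gge0 t : (0 <= t)%R -> (0 <= Gamma2 t)%R by move=> t0; rewrite -G0; exact: Gmono.
pose PhiG := fun f : R => (ne%:R * Gamma2 (f / ne%:R))%R.
pose PsiG := fun t : R => (ne%:R * Gamma2 t)%R.
have HPG : forall W f : R, (0 < W)%R -> (W <= ne%:R)%R -> (0 <= f)%R ->
    (W * Gamma2 (f / W) <= PhiG f)%R.
  by move=> W f W0 Wn f0; exact: persp_mono.
have HP0G : forall f : R, (0 <= f)%R -> (0 <= PhiG f)%R.
  move=> f f0; apply: mulr_ge0; first exact: ltW.
  by apply: Gge0; apply: divr_ge0 => //; exact: ltW.
have HJG : forall u f : X -> R, P.-integrable setT (EFin \o u) -> P.-integrable setT (EFin \o f) ->
     (forall x, 0 <= f x)%R -> (forall x, u x <= 1)%R -> (forall x, u x <= PhiG (f x))%R ->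
     \int[P]_x (u x)%:E <= (PsiG (fine (\int[P]_x (f x)%:E)))%:E.
  by move=> u f iu iF f0 u1 uG; exact: core_gen.
have lin : (exists a : R, forall t, (0 <= t)%R -> Gamma2 t = (a * t)%R) ->
  exists Phi : R -> R,
  [/\ forall W f : R, (0 < W)%R -> (W <= ne%:R)%R -> (0 <= f)%R ->
       (W * Gamma2 (f / W) <= Phi f)%R,
      forall f : R, (0 <= f)%R -> (0 <= Phi f)%R &
      forall u f : X -> R, P.-integrable setT (EFin \o u) -> P.-integrable setT (EFin \o f) ->
       (forall x, 0 <= f x)%R -> (forall x, u x <= 1)%R -> (forall x, u x <= Phi (f x))%R ->
       \int[P]_x (u x)%:E <= (Gamma2 (fine (\int[P]_x (f x)%:E)))%:E].
  move=> [a Ha].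
  have a0 : (0 <= a)%R by have := Gge0 1%R ler01; rewrite Ha // mulr1.
  exists (fun f => a * f)%R; split.
  - move=> W f W0 Wn f0; rewrite Ha; last by apply: divr_ge0 => //; exact: ltW.
    have Wn0 : W != 0%R by rewrite gt_eqF.
    by rewrite (_ : (W * (a * (f / W)) = a * f)%R) //; field.
  - by move=> f f0; exact: mulr_ge0.
  - move=> u f iu iF f0 u1 uG.
    have I0 : (0 <= fine (\int[P]_x (f x)%:E))%R.
      by apply: fine_ge0; apply: integral_ge0 => x _; rewrite lee_fin.
    rewrite Ha //; exact: core_lin.
split; [|split; [|split]].
- move=> h r Hh Rr fin1 fin2.
  exact: (conj1_gen meta me mh mr ml2 l20 im01b iml2 im01 imdef imsurr GA2 cb1 cb2
            (Phi := PhiG) (Psi := PsiG) HPG HP0G HJG Hh Rr fin1 fin2).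
- move=> /lin [Phi [HP HP0 HJ]] h r Hh Rr fin1 fin2.
  exact: (conj1_gen meta me mh mr ml2 l20 im01b iml2 im01 imdef imsurr GA2 cb1 cb2
            (Phi := Phi) (Psi := Gamma2) HP HP0 HJ Hh Rr fin1 fin2).
- move=> h0 HH r Rr fin2.
  exact: (conj3_gen meta me mh mr ml2 l20 iml2 im01 imsurr imdefh GA2 cb2
            (Phi := PhiG) (Psi := PsiG) HPG HP0G HJG HH Rr fin2).
- move=> /lin [Phi [HP HP0 HJ]] h0 HH r Rr fin2.
  exact: (conj3_gen meta me mh mr ml2 l20 iml2 im01 imsurr imdefh GA2 cb2
            (Phi := Phi) (Psi := Gamma2) HP HP0 HJ HH Rr fin2).
Qed.
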